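(* Suppose $\Omega\in\mathcal U^+(3)$ is of the form \[\Omega=\alpha dz_{123}+\beta_1dz_{\overline123}+\beta_2dz_{1\overline23}+\beta_3dz_{12\overline3}+\gamma_1dz_{1\overline{23}}+\gamma_2dz_{\overline12\overline3}+\gamma_3dz_{\overline{12}3}+\delta dz_{\overline{123}}\] with complex coefficients. Then $\alpha\ne0$ and the cubic polynomial $P(z)=\alpha z^3+(\beta_1+\beta_2+\beta_3)z^2+(\gamma_1+\gamma_2+\gamma_3)z+\delta$ has all its roots in the open unit disk. In particular $|\delta/\alpha|<1$.
   Context: $\mathbb R^6$ has coordinates $x_1,y_1,x_2,y_2,x_3,y_3$, $\omega=\sum_jdx_j\wedge dy_j$, $z_j=x_j+iy_j$; $dz_I$ denotes $dz_1\wedge dz_2\wedge dz_3$ with $dz_j$ replaced by $d\bar z_j$ for each overlined index $j$. $\mathcal U(3)$ is the set of $\Omega\in\bigwedge^3(\mathbb R^6)^*\otimes\mathbb C$ with $\Omega\wedge\omega=0$ and $\Omega|_L\ne0$ for all Lagrangian subspaces $L$; $\mathcal U^+(3)$ is its connected component containing $(3,0)$-forms for some $\omega$-compatible complex structure. *)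

(* Defs.v *)
From HB Require Import structures.
From mathcomp Require Import all_boot all_order all_algebra all_fingroup.
From mathcomp Require Import all_classical all_reals all_analysis.
From mathcomp Require Import complex.
Set Implicit Arguments. Unset Strict Implicit. Unset Printing Implicit Defensive.
Import Order.TTheory GRing.Theory Num.Theory.
Import numFieldNormedType.Exports.
Local Open Scope ring_scope.
Local Open Scope complex_scope.

Section SL.
Variable R : realType.

(* R^6 = row vectors 'rV[R]_6 with coordinates ordered x1,y1,x2,y2,x3,y3:
   coordinate x_j has index 2j, y_j has index 2j+1 (j = 0,1,2). *)
Definition xi (j : 'I_3) : 'I_6 := inord (2 * j).
Definition yi (j : 'I_3) : 'I_6 := inord (2 * j).+1.

Definition ebase (k : 'I_6) : 'rV[R]_6 := delta_mx 0 k.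

Definition omega (u v : 'rV[R]_6) : R :=
  \sum_(j < 3) (u 0 (xi j) * v 0 (yi j) - u 0 (yi j) * v 0 (xi j)).

(* The (finite-dimensional) complex vector space of complex-valued trilinear
   forms on R^6, given by their components Om (i,j,k) = Om(e_i,e_j,e_k),
   with its natural (product = Euclidean) topology. *)
Definition form3 := {ptws ('I_6 * 'I_6 * 'I_6)%type -> (R[i])^o}.

Definition ev3 (Om : form3) (u v w : 'rV[R]_6) : R[i] :=
  \sum_(i < 6) \sum_(j < 6) \sum_(k < 6)
     (Om (i, j, k) : R[i]) * (u 0 i)%:C * (v 0 j)%:C * (w 0 k)%:C.

(* Om is alternating, i.e. an element of /\^3 (R^6)^* (x) C *)
Definition is_form3 (Om : form3) : Prop :=
  forall i j k, Om (i, j, k) = - Om (j, i, k) /\ Om (i, j, k) = - Om (i, k, j).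

(* Om /\ omega = 0: the alternating 5-form
   (v1..v5) |-> sum_{s in S_5} sgn(s) Om(v_s1,v_s2,v_s3) omega(v_s4,v_s5)
   (a nonzero constant multiple of Om /\ omega) vanishes on all basis 5-tuples. *)
Definition wedge_omega_zero (Om : form3) : Prop :=
  forall f : 'I_5 -> 'I_6,
    \sum_(s : 'S_5) (-1) ^+ s *
       (Om (f (s (inord 0)), f (s (inord 1)), f (s (inord 2))) : R[i]) *
       (omega (ebase (f (s (inord 3)))) (ebase (f (s (inord 4)))))%:C = 0.

Definition lagrangian (L : {vspace 'rV[R]_6}) : Prop :=
  (\dim L = 3)%N /\ forall u v, u \in L -> v \in L -> omega u v = 0.

Definition U3 : set form3 :=
  [set Om | [/\ is_form3 Om, wedge_omega_zero Om &
     forall L : {vspace 'rV[R]_6}, lagrangian L ->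
       exists u v w, [/\ u \in L, v \in L, w \in L & ev3 Om u v w != 0]]].

Definition compatible_cs (J : 'M[R]_6) : Prop :=
  [/\ J *m J = - 1%:M,
      forall u v, omega (u *m J) (v *m J) = omega u v &
      forall u, u != 0 -> 0 < omega u (u *m J)].

Definition type30 (J : 'M[R]_6) (Om : form3) : Prop :=
  is_form3 Om /\ forall u v w, ev3 Om (u *m J) v w = 'i * ev3 Om u v w.

Definition Uplus3 : set form3 :=
  [set Om | exists (J : 'M[R]_6) (Om0 : form3),
     [/\ compatible_cs J, type30 J Om0 & connected_component U3 Om0 Om]].

Definition dz (j : 'I_3) (u : 'rV[R]_6) : R[i] :=
  (u 0 (xi j))%:C + 'i * (u 0 (yi j))%:C.
Definition dzb (j : 'I_3) (u : 'rV[R]_6) : R[i] :=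
  (u 0 (xi j))%:C - 'i * (u 0 (yi j))%:C.

(* wedge of three complex 1-forms (determinant convention) *)
Definition wedge3 (t1 t2 t3 : 'rV[R]_6 -> R[i]) (u v w : 'rV[R]_6) : R[i] :=
    t1 u * t2 v * t3 w - t1 u * t2 w * t3 v - t1 v * t2 u * t3 w
  + t1 v * t2 w * t3 u + t1 w * t2 u * t3 v - t1 w * t2 v * t3 u.

Definition o0 : 'I_3 := inord 0.
Definition o1 : 'I_3 := inord 1.
Definition o2 : 'I_3 := inord 2.

End SL.

(* Main.v *)
Require Import Defs.
From HB Require Import structures.
From mathcomp Require Import all_boot all_order all_algebra all_fingroup.
From mathcomp Require Import all_classical all_reals all_analysis.
From mathcomp Require Import complex.
From mathcomp Require Import ring lra zify.
Import Order.TTheory GRing.Theory Num.Theory.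
Import numFieldNormedType.Exports.
Set Implicit Arguments. Unset Strict Implicit. Unset Printing Implicit Defensive.
Local Open Scope ring_scope.
Local Open Scope complex_scope.
Local Open Scope classical_set_scope.


Section Dev.
Variable R : realType.
Local Notation C := R[i].
Local Notation row := 'rV[C]_6.

Definition emb (u : 'rV[R]_6) : row := map_mx (real_complex R) u.
Definition ev3C (Om : form3 R) (Y1 Y2 Y3 : row) : C :=
  \sum_(i < 6) \sum_(j < 6) \sum_(k < 6) (Om (i,j,k) : C) * Y1 0 i * Y2 0 j * Y3 0 k.

Lemma ev3E Om u v w : ev3 Om u v w = ev3C Om (emb u) (emb v) (emb w).
Proof.
by rewrite /ev3 /ev3C; apply: eq_bigr => i _; apply: eq_bigr => j _;
  apply: eq_bigr => k _; rewrite !mxE.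
Qed.

Record tril (F : row -> row -> row -> C) : Prop := Tril {
  tr1 : forall Y Y' Z W, F (Y + Y') Z W = F Y Z W + F Y' Z W;
  tr2 : forall c Y Z W, F (c *: Y) Z W = c * F Y Z W;
  tr3 : forall Y Z Z' W, F Y (Z + Z') W = F Y Z W + F Y Z' W;
  tr4 : forall c Y Z W, F Y (c *: Z) W = c * F Y Z W;
  tr5 : forall Y Z W W', F Y Z (W + W') = F Y Z W + F Y Z W';
  tr6 : forall c Y Z W, F Y Z (c *: W) = c * F Y Z W }.

Lemma ev3C_tril Om : tril (ev3C Om).
Proof.
split=> *; rewrite /ev3C.
- rewrite -big_split; apply: eq_bigr => i _; rewrite -big_split;
  apply: eq_bigr => j _; rewrite -big_split; apply: eq_bigr => k _;
  rewrite !mxE /=; ring.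
- rewrite mulr_sumr; apply: eq_bigr => i _; rewrite mulr_sumr;
  apply: eq_bigr => j _; rewrite mulr_sumr; apply: eq_bigr => k _;
  rewrite !mxE /=; ring.
- rewrite -big_split; apply: eq_bigr => i _; rewrite -big_split;
  apply: eq_bigr => j _; rewrite -big_split; apply: eq_bigr => k _;
  rewrite !mxE /=; ring.
- rewrite mulr_sumr; apply: eq_bigr => i _; rewrite mulr_sumr;
  apply: eq_bigr => j _; rewrite mulr_sumr; apply: eq_bigr => k _;
  rewrite !mxE /=; ring.
- rewrite -big_split; apply: eq_bigr => i _; rewrite -big_split;
  apply: eq_bigr => j _; rewrite -big_split; apply: eq_bigr => k _;
  rewrite !mxE /=; ring.
- rewrite mulr_sumr; apply: eq_bigr => i _; rewrite mulr_sumr;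
  apply: eq_bigr => j _; rewrite mulr_sumr; apply: eq_bigr => k _;
  rewrite !mxE /=; ring.
Qed.

Lemma decompC (Y : row) :
  Y = emb (map_mx (@complex.Re R) Y) + 'i *: emb (map_mx (@complex.Im R) Y).
Proof. by apply/rowP => k; rewrite !mxE [LHS]complexE. Qed.

Lemma tril_real F G : tril F -> tril G ->
  (forall u v w, F (emb u) (emb v) (emb w) = G (emb u) (emb v) (emb w)) ->
  forall Y1 Y2 Y3, F Y1 Y2 Y3 = G Y1 Y2 Y3.
Proof.
move=> [F1 F2 F3 F4 F5 F6] [G1 G2 G3 G4 G5 G6] E Y1 Y2 Y3.
rewrite (decompC Y1) (decompC Y2) (decompC Y3).
by rewrite !(F1, F2, F3, F4, F5, F6) !(G1, G2, G3, G4, G5, G6) !E.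
Qed.

Lemma tril_sum1 F (I : finType) (c : I -> C) X Z W : tril F ->
  F (\sum_i c i *: X i) Z W = \sum_i c i * F (X i) Z W.
Proof.
move=> [F1 F2 _ _ _ _].
have F0 : F 0 Z W = 0 by rewrite -(scale0r 0) F2 mul0r.
rewrite (big_morph (fun Y => F Y Z W) (fun Y Y' => F1 Y Y' Z W) F0).
by apply: eq_bigr => i _; rewrite F2.
Qed.
Lemma tril_sum2 F (I : finType) (c : I -> C) X Y W : tril F ->
  F Y (\sum_i c i *: X i) W = \sum_i c i * F Y (X i) W.
Proof.
move=> [_ _ F1 F2 _ _].
have F0 : F Y 0 W = 0 by rewrite -(scale0r 0) F2 mul0r.
rewrite (big_morph (fun Z => F Y Z W) (fun Z Z' => F1 Y Z Z' W) F0).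
by apply: eq_bigr => i _; rewrite F2.
Qed.
Lemma tril_sum3 F (I : finType) (c : I -> C) X Y Z : tril F ->
  F Y Z (\sum_i c i *: X i) = \sum_i c i * F Y Z (X i).
Proof.
move=> [_ _ _ _ F1 F2].
have F0 : F Y Z 0 = 0 by rewrite -(scale0r 0) F2 mul0r.
rewrite (big_morph (fun W => F Y Z W) (fun W W' => F1 Y Z W W') F0).
by apply: eq_bigr => i _; rewrite F2.
Qed.

Lemma ev3C_swap12 Om Y1 Y2 Y3 : is_form3 Om ->
  ev3C Om Y1 Y2 Y3 = - ev3C Om Y2 Y1 Y3.
Proof.
move=> H; rewrite /ev3C [in RHS]exchange_big -sumrN; apply: eq_bigr => i _.
rewrite -sumrN; apply: eq_bigr => j _; rewrite -sumrN; apply: eq_bigr => k _.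
rewrite (proj1 (H i j k)); ring.
Qed.
Lemma ev3C_swap23 Om Y1 Y2 Y3 : is_form3 Om ->
  ev3C Om Y1 Y2 Y3 = - ev3C Om Y1 Y3 Y2.
Proof.
move=> H; rewrite /ev3C -sumrN; apply: eq_bigr => i _.
rewrite [in RHS]exchange_big -sumrN; apply: eq_bigr => j _; rewrite -sumrN; apply: eq_bigr => k _.
rewrite (proj2 (H i j k)); ring.
Qed.

Lemma xx0 (x : C) : x = - x -> x = 0.
Proof.
move=> /eqP; rewrite -subr_eq0 opprK -mulr2n mulrn_eq0 /= => /eqP //.
Qed.

Lemma ev3C_rep12 Om Y Z : is_form3 Om -> ev3C Om Y Y Z = 0.
Proof. by move=> H; apply: xx0; rewrite {1}ev3C_swap12. Qed.
Lemma ev3C_rep23 Om Y Z : is_form3 Om -> ev3C Om Z Y Y = 0.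
Proof. by move=> H; apply: xx0; rewrite {1}ev3C_swap23. Qed.
Lemma ev3C_rep13 Om Y Z : is_form3 Om -> ev3C Om Y Z Y = 0.
Proof. by move=> H; rewrite ev3C_swap23 // ev3C_rep12 // oppr0. Qed.

Lemma ord3_cases (a : 'I_3) : [\/ a = o0, a = o1 | a = o2].
Proof.
case: a => [[|[|[|m]]] H] //.
- by constructor 1; apply: val_inj; rewrite /= inordK.
- by constructor 2; apply: val_inj; rewrite /= inordK.
- by constructor 3; apply: val_inj; rewrite /= inordK.
Qed.

Lemma alt27 Om (X : 'I_3 -> row) : is_form3 Om ->
  ev3C Om (X o0) (X o1) (X o2) = 0 -> forall a b c, ev3C Om (X a) (X b) (X c) = 0.
Proof.
move=> H H0 a b c.
case: (ord3_cases a) => ->; case: (ord3_cases b) => ->; case: (ord3_cases c) => ->;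
first [ by apply: ev3C_rep12 | by apply: ev3C_rep13 | by apply: ev3C_rep23
      | exact: H0
      | by rewrite ev3C_swap12 // H0 oppr0
      | by rewrite ev3C_swap23 // H0 oppr0
      | by rewrite ev3C_swap12 // ev3C_swap23 // H0 !oppr0
      | by rewrite ev3C_swap23 // ev3C_swap12 // H0 !oppr0
      | by rewrite ev3C_swap12 // ev3C_swap23 // ev3C_swap12 // H0 !oppr0 ].
Qed.

Lemma alt_sum Om (X : 'I_3 -> row) (c1 c2 c3 : 'I_3 -> C) : is_form3 Om ->
  ev3C Om (X o0) (X o1) (X o2) = 0 ->
  ev3C Om (\sum_a c1 a *: X a) (\sum_a c2 a *: X a) (\sum_a c3 a *: X a) = 0.
Proof.
move=> H H0; have T := ev3C_tril Om.
rewrite tril_sum1 //; apply: big1 => a _; rewrite tril_sum2 // big1 ?mulr0 // => b _.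
rewrite tril_sum3 // big1 ?mulr0 // => c _.
by rewrite alt27 // mulr0.
Qed.

End Dev.


Section Dev2.
Variable R : realType.
Local Notation C := R[i].
Local Notation row := 'rV[C]_6.

Lemma xi_val (j : 'I_3) : val (xi j) = (2 * j)%N.
Proof. by rewrite /xi /= inordK //; case: j => [[|[|[|]]]]. Qed.
Lemma yi_val (j : 'I_3) : val (yi j) = (2 * j).+1%N.
Proof. by rewrite /yi /= inordK //; case: j => [[|[|[|]]]]. Qed.
Lemma xixi a b : (xi a == xi b) = (a == b).
Proof.
apply/eqP/eqP => [/(congr1 val)|->//]; rewrite !xi_val => H.
by apply: val_inj => /=; lia.
Qed.
Lemma yiyi a b : (yi a == yi b) = (a == b).
Proof.
apply/eqP/eqP => [/(congr1 val)|->//]; rewrite !yi_val => H.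
by apply: val_inj => /=; lia.
Qed.
Lemma xiyi a b : (xi a == yi b) = false.
Proof. by apply/eqP => /(congr1 val); rewrite xi_val yi_val; lia. Qed.
Lemma yixi a b : (yi a == xi b) = false.
Proof. by apply/eqP => /(congr1 val); rewrite xi_val yi_val; lia. Qed.

Lemma ebaseE k m : ebase R k 0 m = (m == k)%:R.
Proof. by rewrite /ebase mxE eqxx. Qed.
Lemma embE k m : emb (ebase R k) 0 m = (m == k)%:R.
Proof. by rewrite mxE ebaseE; case: (m == k). Qed.

Lemma sum_delta (K : pzRingType) (I : finType) (F : I -> K) i :
  \sum_m F m * (m == i)%:R = F i.
Proof.
rewrite (bigD1 i) //= eqxx mulr1 big1 ?addr0 // => m /negbTE ->.
by rewrite mulr0.
Qed.

Lemma ev3C_basis (Om : form3 R) i j k :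
  ev3C Om (emb (ebase R i)) (emb (ebase R j)) (emb (ebase R k)) = Om (i, j, k).
Proof.
rewrite /ev3C.
rewrite (eq_bigr (fun m => Om (m,j,k) * (m == i)%:R)).
  exact: (sum_delta (fun m => (Om (m,j,k) : C))).
move=> m _.
rewrite (eq_bigr (fun n => Om (m,n,k) * (m==i)%:R * (n == j)%:R)).
  exact: (sum_delta (fun n => (Om (m,n,k) : C) * (m==i)%:R)).
move=> n _.
rewrite (eq_bigr (fun l => Om (m,n,l) * (m==i)%:R * (n==j)%:R * (l == k)%:R)).
  exact: (sum_delta (fun l => (Om (m,n,l) : C) * (m==i)%:R * (n==j)%:R)).
by move=> l _; rewrite !embE.
Qed.

End Dev2.


Section Dev3.
Variable R : realType.
Local Notation C := R[i].
Local Notation row := 'rV[C]_6.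

Definition idx (a : 'I_3) (b : bool) : 'I_6 := if b then yi a else xi a.
Definition polv (w : C) (b : bool) : C :=
  if b then (- 'i / 2) * (1 - w) else (1 / 2) * (1 + w).
Definition pol (b : bool) : {poly C} :=
  if b then (- 'i / 2) *: (1 - 'X) else (1 / 2) *: (1 + 'X).
Definition Xv (p q : C) (a : 'I_3) : row :=
  p *: emb (ebase R (xi a)) + q *: emb (ebase R (yi a)).
Definition Xw (w : C) (a : 'I_3) : row := Xv (polv w false) (polv w true) a.
Definition Qp (Om : form3 R) : {poly C} :=
  \sum_(b0 : bool) \sum_(b1 : bool) \sum_(b2 : bool)
    (Om (idx o0 b0, idx o1 b1, idx o2 b2) : C) *: (pol b0 * pol b1 * pol b2).

Lemma pol_horner b w : (pol b).[w] = polv w b.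
Proof. by case: b; rewrite /pol /polv !hornerE. Qed.

Lemma Qp_horner Om w : (Qp Om).[w] = \sum_(b0 : bool) \sum_(b1 : bool) \sum_(b2 : bool)
    (Om (idx o0 b0, idx o1 b1, idx o2 b2) : C) * (polv w b0 * polv w b1 * polv w b2).
Proof.
rewrite /Qp horner_sum; apply: eq_bigr => b0 _; rewrite horner_sum.
apply: eq_bigr => b1 _; rewrite horner_sum; apply: eq_bigr => b2 _.
by rewrite hornerZ !hornerM !pol_horner.
Qed.

Lemma ev3C_Xw Om w : ev3C Om (Xw w o0) (Xw w o1) (Xw w o2) = (Qp Om).[w].
Proof.
rewrite Qp_horner !big_bool /= /Xw /Xv.
have [T1 T2 T3 T4 T5 T6] := ev3C_tril Om.
rewrite !(T1, T2, T3, T4, T5, T6) !ev3C_basis /=; ring.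
Qed.

Lemma normi : `|'i| = 1 :> C.
Proof. by rewrite normc_def /= expr0n /= expr1n add0r sqrtr1. Qed.

Lemma half_le1 (x : C) : 0 <= x -> x <= 2 -> 2^-1 * x <= 1.
Proof.
move=> x0 x2.
have h : 2^-1 * x <= 2^-1 * 2 by apply: ler_wpM2l => //; rewrite invr_ge0 ler0n.
by rewrite (le_trans h) // mulVf // pnatr_eq0.
Qed.

Lemma le2 (x : C) : x <= 1 -> 1 + x <= 2.
Proof. by move=> hx; rewrite -[2]/(1 *+ 2 : C) mulr2n lerD2l. Qed.

Lemma polv_le1 w b : `|w| <= 1 -> `|polv w b| <= 1.
Proof.
move=> hw; case: b; rewrite /polv normrM.
- rewrite normrM normrN normi mul1r normfV normr_nat; apply: half_le1 => //.
  by rewrite (le_trans (ler_normB _ _)) // normr1 le2.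
- rewrite normrM normr1 mul1r normfV normr_nat; apply: half_le1 => //.
  by rewrite (le_trans (ler_normD _ _)) // normr1 le2.
Qed.


Lemma sum_bool_le (f : bool -> C) (c : C) :
  (forall b, `|f b| <= c) -> `|\sum_(b : bool) f b| <= 2 * c.
Proof.
move=> H; rewrite big_bool (le_trans (ler_normD _ _)) //.
by rewrite mulr2n mulrDl mul1r lerD.
Qed.

Lemma Qp_diff (Om Om' : form3 R) w (e : C) : `|w| <= 1 ->
  (forall b0 b1 b2, `|(Om' (idx o0 b0, idx o1 b1, idx o2 b2) : C) -
                      Om (idx o0 b0, idx o1 b1, idx o2 b2)| <= e) ->
  `|(Qp Om').[w] - (Qp Om).[w]| <= 2 * (2 * (2 * e)).
Proof.
move=> hw H; rewrite !Qp_horner -sumrB; apply: sum_bool_le => b0.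
rewrite -sumrB; apply: sum_bool_le => b1.
rewrite -sumrB; apply: sum_bool_le => b2.
rewrite -mulrBl normrM -[X in _ <= X]mulr1.
apply: ler_pM => //; rewrite !normrM.
apply: mulr_ile1; rewrite ?mulr_ge0 ?polv_le1 //.
by apply: mulr_ile1; rewrite ?polv_le1.
Qed.
End Dev3.


Section Dev4.
Variable R : realType.
Local Notation C := R[i].
Local Notation row := 'rV[C]_6.
Local Notation rowR := 'rV[R]_6.

Definition Vr (p q : R) (a : 'I_3) : rowR := p *: ebase R (xi a) + q *: ebase R (yi a).

Lemma VrEx p q a j : Vr p q a 0 (xi j) = p * (a == j)%:R.
Proof. by rewrite !mxE !eqxx /= xixi xiyi mulr0 addr0 eq_sym. Qed.
Lemma VrEy p q a j : Vr p q a 0 (yi j) = q * (a == j)%:R.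
Proof. by rewrite !mxE !eqxx /= yiyi yixi mulr0 add0r eq_sym. Qed.

Lemma emb_Vr p q a : emb (Vr p q a) = Xv p%:C q%:C a.
Proof. by apply/rowP => k; rewrite !mxE rmorphD !rmorphM. Qed.

Lemma omega_addl (u u' v : rowR) : omega (u + u') v = omega u v + omega u' v.
Proof. rewrite /omega -big_split; apply: eq_bigr => j _; rewrite !mxE /=; ring. Qed.
Lemma omega_scalel k (u v : rowR) : omega (k *: u) v = k * omega u v.
Proof. rewrite /omega mulr_sumr; apply: eq_bigr => j _; rewrite !mxE /=; ring. Qed.
Lemma omega_addr (u v v' : rowR) : omega u (v + v') = omega u v + omega u v'.
Proof. rewrite /omega -big_split; apply: eq_bigr => j _; rewrite !mxE /=; ring. Qed.
Lemma omega_scaler k (u v : rowR) : omega u (k *: v) = k * omega u v.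
Proof. rewrite /omega mulr_sumr; apply: eq_bigr => j _; rewrite !mxE /=; ring. Qed.

Lemma omega_sum0 (X : 'I_3 -> rowR) (a b : 'I_3 -> R) :
  (forall i j, omega (X i) (X j) = 0) ->
  omega (\sum_i a i *: X i) (\sum_j b j *: X j) = 0.
Proof.
move=> H.
have Hl : forall v : rowR, omega 0 v = 0 by move=> v; rewrite /omega big1 // => j _; rewrite !mxE; ring.
have Hr : forall u : rowR, omega u 0 = 0 by move=> u; rewrite /omega big1 // => j _; rewrite !mxE; ring.
rewrite (big_morph (fun u => omega u _) (fun u u' => omega_addl u u' _) (Hl _)).
apply: big1 => i _; rewrite omega_scalel.
rewrite (big_morph (fun v => omega _ v) (fun v v' => omega_addr _ v v') (Hr _)).
by rewrite big1 ?mulr0 // => j _; rewrite omega_scaler H mulr0.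
Qed.

Lemma omega_VV p q a b : omega (Vr p q a) (Vr p q b) = 0.
Proof. by rewrite /omega big1 // => j _; rewrite !VrEx !VrEy; ring. Qed.

Definition Vt (p q : R) : 3.-tuple rowR := [tuple Vr p q o0; Vr p q o1; Vr p q o2].

Lemma Vnth p q (i : 'I_3) : (Vt p q)`_i = Vr p q i.
Proof.
case: i => [[|[|[|m]]] Hi] //=; congr Vr; apply: val_inj; by rewrite /= inordK.
Qed.

Lemma sumVr_x p q (k : 'I_3 -> R) j :
  (\sum_i k i *: Vr p q i) 0 (xi j) = k j * p.
Proof.
rewrite summxE (eq_bigr (fun i => (k i * p) * (i == j)%:R)) ?sum_delta //.
by move=> i _; rewrite mxE VrEx mulrA.
Qed.
Lemma sumVr_y p q (k : 'I_3 -> R) j :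
  (\sum_i k i *: Vr p q i) 0 (yi j) = k j * q.
Proof.
rewrite summxE (eq_bigr (fun i => (k i * q) * (i == j)%:R)) ?sum_delta //.
by move=> i _; rewrite mxE VrEy mulrA.
Qed.

Lemma Vt_free p q : (p != 0) || (q != 0) -> free (Vt p q).
Proof.
move=> pq; apply/freeP => k Hk i.
have Hk' : \sum_i k i *: Vr p q i = 0.
  by rewrite -[RHS]Hk; apply: eq_bigr => j _; rewrite Vnth.
have hx := sumVr_x p q k i; have hy := sumVr_y p q k i.
rewrite Hk' mxE in hx; rewrite Hk' mxE in hy.
case/orP: pq => [p0|q0].
- by move/eqP: hx; rewrite eq_sym mulf_eq0 (negbTE p0) orbF => /eqP.
- by move/eqP: hy; rewrite eq_sym mulf_eq0 (negbTE q0) orbF => /eqP.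
Qed.

Lemma Lag_lagrangian p q : (p != 0) || (q != 0) -> lagrangian <<Vt p q>>%VS.
Proof.
move=> pq; split; first by move/eqP: (Vt_free pq) => ->; rewrite size_tuple.
move=> u v /coord_span -> /coord_span ->.
apply: omega_sum0 => i j; rewrite !Vnth; exact: omega_VV.
Qed.

Lemma emb_sumV p q (c : 'I_3 -> R) :
  emb (\sum_i c i *: (Vt p q)`_i) = \sum_i (c i)%:C *: emb (Vr p q i).
Proof.
apply/rowP => k; rewrite !mxE !summxE rmorph_sum; apply: eq_bigr => i _.
by rewrite Vnth !mxE rmorphM.
Qed.

Lemma U3_Vr (Om : form3 R) p q : U3 Om -> (p != 0) || (q != 0) ->
  ev3 Om (Vr p q o0) (Vr p q o1) (Vr p q o2) != 0.
Proof.
move=> [H1 H2 H3] pq; apply/negP => /eqP E.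
have [u [v [w [hu hv hw]]]] := H3 _ (Lag_lagrangian pq).
apply/negP; rewrite negbK.
rewrite (coord_span hu) (coord_span hv) (coord_span hw) ev3E !emb_sumV.
apply/eqP; apply: (alt_sum (X := fun i => emb (Vr p q i))) => //.
by rewrite -ev3E.
Qed.

End Dev4.


Section Dev5.
Variable R : realType.
Local Notation C := R[i].

Lemma elem_bounds (w z : C) : `|w| <= 1 -> 1 < `|z| ->
  [/\ (1 - `|w|) * `|0 - z| <= `|w - z|, `|w - z| <= 2 * `|0 - z| &
      `|z| - 1 <= `|w - z|].
Proof.
move=> hw hz; rewrite sub0r normrN.
have hd : `|z| - `|w| <= `|w - z| by rewrite distrC lerB_dist.
split.
- rewrite mulrBl mul1r (le_trans _ hd) // lerD2l lerN2.
  by rewrite ler_peMr // ltW.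
- rewrite (le_trans (ler_normB _ _)) // mulr2n mulrDl mul1r lerD2r.
  by rewrite (le_trans hw) // ltW.
- by rewrite (le_trans _ hd) // lerD2l lerN2.
Qed.

Lemma prod_bounds (r : seq C) (w : C) : (forall z, z \in r -> 1 < `|z|) -> `|w| <= 1 ->
  [/\ (1 - `|w|) ^+ size r * `|\prod_(z <- r) (0 - z)| <= `|\prod_(z <- r) (w - z)|,
      `|\prod_(z <- r) (w - z)| <= 2 ^+ size r * `|\prod_(z <- r) (0 - z)| &
      \prod_(z <- r) (`|z| - 1) <= `|\prod_(z <- r) (w - z)|].
Proof.
move=> hr hw; have w1 : 0 <= 1 - `|w| by rewrite subr_ge0.
elim: r hr => [|z r IH] hr; first by rewrite !big_nil !expr0 normr1 mul1r.
have hz : 1 < `|z| by apply: hr; rewrite mem_head.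
have hr' : forall y, y \in r -> 1 < `|y| by move=> y hy; apply: hr; rewrite inE hy orbT.
have [IH1 IH2 IH3] := IH hr'.
have [e1 e2 e3] := elem_bounds hw hz.
rewrite !big_cons !normrM /= !exprS; split.
- rewrite mulrACA; apply: ler_pM; rewrite ?mulr_ge0 ?exprn_ge0 ?normr_ge0 //.
- by rewrite mulrACA; apply: ler_pM; rewrite ?normr_ge0.
- have z1 : 0 <= `|z| - 1 by rewrite subr_ge0; apply: ltW.
  have p1 : 0 <= \prod_(j <- r) (`|j| - 1).
    by rewrite big_seq; apply: prodr_ge0 => y hy; rewrite subr_ge0; apply: ltW; exact: hr'.
  by apply: ler_pM.
Qed.

Lemma noroot_fact (Q : {poly C}) : (size Q <= 4)%N ->
  (forall w, `|w| <= 1 -> Q.[w] != 0) ->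
  exists c (r : seq C), [/\ c != 0, (size r <= 3)%N,
     forall z, z \in r -> 1 < `|z| & forall w, Q.[w] = c * \prod_(z <- r) (w - z)].
Proof.
move=> hs hQ; have [r Hr] := closed_field_poly_normal Q.
have Q0 : Q != 0.
  by apply/eqP => E; move: (hQ 0); rewrite normr0 ler01 E horner0 eqxx => /(_ isT).
have c0 : lead_coef Q != 0 by rewrite lead_coef_eq0.
exists (lead_coef Q), r; split => //.
- move: hs; rewrite Hr size_scale // size_prod_XsubC; done.
- move=> z hz; rewrite real_ltNge ?normr_real ?real1 //; apply/negP => hz1.
  move: (hQ z hz1); rewrite Hr hornerZ.
  have : root (\prod_(a <- r) ('X - a%:P)) z by rewrite root_prod_XsubC.
  by move/eqP => ->; rewrite mulr0 eqxx.
- by move=> w; rewrite {1}Hr hornerZ horner_prod; congr (_ * _); apply: eq_bigr => z _; rewrite hornerXsubC.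
Qed.

Lemma noroot_bounds (Q : {poly C}) : (size Q <= 4)%N ->
  (forall w, `|w| <= 1 -> Q.[w] != 0) ->
  [/\ forall w, `|w| <= 1 -> `|Q.[0]| * (1 - `|w|) ^+ 3 <= `|Q.[w]|,
      forall w, `|w| <= 1 -> `|Q.[w]| <= 8 * `|Q.[0]| &
      exists2 m, 0 < m & forall w, `|w| <= 1 -> m <= `|Q.[w]|].
Proof.
move=> hs hQ; have [c [r [c0 hr hroots hev]]] := noroot_fact hs hQ.
have w0 : `|0 : C| <= 1 by rewrite normr0 ler01.
split.
- move=> w hw; have [b1 _ _] := prod_bounds hroots hw.
  rewrite !hev !normrM -mulrA ler_pM2l ?normr_gt0 // mulrC.
  apply: le_trans b1; apply: ler_wpM2r => //.
  have w1 : 0 <= 1 - `|w| by rewrite subr_ge0.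
  have w2 : 1 - `|w| <= 1 by rewrite lerBlDr lerDl.
  by apply: ler_wiXn2l.
- move=> w hw; have [_ b2 _] := prod_bounds hroots hw.
  rewrite !hev !normrM mulrCA ler_pM2l ?normr_gt0 //.
  apply: (le_trans b2); apply: ler_wpM2r => //.
  have -> : (8 : C) = 2 ^+ 3 by rewrite -natrX.
  by apply: ler_weXn2l => //; rewrite ler1n.
- exists (`|c| * \prod_(z <- r) (`|z| - 1)).
    rewrite mulr_gt0 ?normr_gt0 // big_seq prodr_gt0 // => z hz.
    by rewrite subr_gt0 hroots.
  move=> w hw; have [_ _ b3] := prod_bounds hroots hw.
  by rewrite hev normrM ler_pM2l ?normr_gt0.
Qed.

End Dev5.


Section Dev6.
Variable R : realType.
Local Notation C := R[i].
Local Notation rowC := 'rV[C]_6.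
Local Notation rowR := 'rV[R]_6.

Definition re (Y : rowC) : rowR := map_mx (@complex.Re R) Y.
Definition im (Y : rowC) : rowR := map_mx (@complex.Im R) Y.
Definition Jc (J : 'M[R]_6) : 'M[C]_6 := map_mx (real_complex R) J.
Definition Kmat J : 'M[C]_6 := 1%:M + 'i *: Jc J.
Definition Khat J : 'M[C]_6 := 1%:M - 'i *: Jc J.
Definition Wm (p q : C) : 'M[C]_(3, 6) := \matrix_(a < 3) Xv p q a.
Definition sgn (p q : C) : R :=
  complex.Re p * complex.Im q - complex.Re q * complex.Im p.

Lemma ReD (x y : C) : complex.Re (x + y) = complex.Re x + complex.Re y.
Proof. by case: x => ? ?; case: y. Qed.
Lemma ImD (x y : C) : complex.Im (x + y) = complex.Im x + complex.Im y.
Proof. by case: x => ? ?; case: y. Qed.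
Lemma Re0 : complex.Re (0 : C) = 0. Proof. by []. Qed.
Lemma Im0 : complex.Im (0 : C) = 0. Proof. by []. Qed.

Lemma re_mulJ (Y : rowC) J : re (Y *m Jc J) = re Y *m J.
Proof.
apply/rowP => j; rewrite !mxE (big_morph _ ReD Re0); apply: eq_bigr => k _.
by rewrite !mxE; case: (Y 0 k) => a b /=; ring.
Qed.
Lemma im_mulJ (Y : rowC) J : im (Y *m Jc J) = im Y *m J.
Proof.
apply/rowP => j; rewrite !mxE (big_morph _ ImD Im0); apply: eq_bigr => k _.
by rewrite !mxE; case: (Y 0 k) => a b /=; ring.
Qed.
Lemma re_scaleNi (Y : rowC) : re (- 'i *: Y) = im Y.
Proof. by apply/rowP => j; rewrite !mxE; case: (Y 0 j) => a b /=; ring. Qed.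
Lemma im_scaleNi (Y : rowC) : im (- 'i *: Y) = - re Y.
Proof. by apply/rowP => j; rewrite !mxE; case: (Y 0 j) => a b /=; ring. Qed.
Lemma re_scalei (Y : rowC) : re ('i *: Y) = - im Y.
Proof. by apply/rowP => j; rewrite !mxE; case: (Y 0 j) => a b /=; ring. Qed.
Lemma im_scalei (Y : rowC) : im ('i *: Y) = re Y.
Proof. by apply/rowP => j; rewrite !mxE; case: (Y 0 j) => a b /=; ring. Qed.

Lemma decompRI (Y : rowC) : Y = emb (re Y) + 'i *: emb (im Y).
Proof. exact: decompC. Qed.

Lemma omega_oppr (u v : rowR) : omega u (- v) = - omega u v.
Proof. rewrite /omega -sumrN; apply: eq_bigr => j _; rewrite !mxE; ring. Qed.

Lemma K_pos J (Y : rowC) : compatible_cs J -> Y *m Jc J = - 'i *: Y -> Y != 0 ->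
  0 < omega (re Y) (im Y).
Proof.
move=> [_ _ pos] hY Y0.
have e1 : re Y *m J = im Y by rewrite -re_mulJ hY re_scaleNi.
have u0 : re Y != 0.
  apply: contraNneq Y0 => r0; rewrite (decompRI Y) -e1 r0 mul0mx.
  by rewrite /emb !map_mx0 scaler0 addr0.
by rewrite -e1 pos.
Qed.

Lemma Khat_neg J (Y : rowC) : compatible_cs J -> Y *m Jc J = 'i *: Y -> Y != 0 ->
  omega (re Y) (im Y) < 0.
Proof.
move=> [_ _ pos] hY Y0.
have e1 : re Y *m J = - im Y by rewrite -re_mulJ hY re_scalei.
have e2 : im Y = - (re Y *m J) by rewrite e1 opprK.
have u0 : re Y != 0.
  apply: contraNneq Y0 => r0; rewrite (decompRI Y) e2 r0 mul0mx oppr0.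
  by rewrite /emb !map_mx0 scaler0 addr0.
by rewrite e2 omega_oppr oppr_lt0 pos.
Qed.

Lemma XvEx (p q : C) a j : Xv p q a 0 (xi j) = p * (a == j)%:R.
Proof. by rewrite /Xv !mxE !eqxx /= xixi xiyi !rmorph_nat mulr0 addr0 eq_sym. Qed.
Lemma XvEy (p q : C) a j : Xv p q a 0 (yi j) = q * (a == j)%:R.
Proof. by rewrite /Xv !mxE !eqxx /= yiyi yixi !rmorph_nat mulr0 add0r eq_sym. Qed.

Lemma Wm_mul (p q : C) (c : 'rV[C]_3) : c *m Wm p q = \sum_a c 0 a *: Xv p q a.
Proof. by rewrite mulmx_sum_row; apply: eq_bigr => a _; rewrite rowK. Qed.

Lemma sumXv_x (p q : C) (k : 'I_3 -> C) j :
  (\sum_i k i *: Xv p q i) 0 (xi j) = k j * p.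
Proof.
rewrite summxE (eq_bigr (fun i => (k i * p) * (i == j)%:R)) ?sum_delta //.
by move=> i _; rewrite mxE XvEx mulrA.
Qed.
Lemma sumXv_y (p q : C) (k : 'I_3 -> C) j :
  (\sum_i k i *: Xv p q i) 0 (yi j) = k j * q.
Proof.
rewrite summxE (eq_bigr (fun i => (k i * q) * (i == j)%:R)) ?sum_delta //.
by move=> i _; rewrite mxE XvEy mulrA.
Qed.

Lemma W_omega (p q : C) (c : 'rV[C]_3) :
  omega (re (c *m Wm p q)) (im (c *m Wm p q)) =
  (\sum_j (complex.Re (c 0 j) ^+ 2 + complex.Im (c 0 j) ^+ 2)) * sgn p q.
Proof.
rewrite Wm_mul /omega mulr_suml; apply: eq_bigr => j _.
rewrite !mxE !sumXv_x !sumXv_y /sgn.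
by case: (c 0 j) => a b; case: p => p1 p2; case: q => q1 q2 /=; ring.
Qed.

Lemma W_omega_le0 (p q : C) c : sgn p q <= 0 -> omega (re (c *m Wm p q)) (im (c *m Wm p q)) <= 0.
Proof.
move=> h; rewrite W_omega mulr_ge0_le0 //.
by apply: sumr_ge0 => j _; rewrite addr_ge0 // sqr_ge0.
Qed.
Lemma W_omega_ge0 (p q : C) c : 0 <= sgn p q -> 0 <= omega (re (c *m Wm p q)) (im (c *m Wm p q)).
Proof.
move=> h; rewrite W_omega mulr_ge0 //.
by apply: sumr_ge0 => j _; rewrite addr_ge0 // sqr_ge0.
Qed.

Lemma mulNii : - 'i * 'i = 1 :> C.
Proof. by rewrite mulNr -expr2 sqr_i opprK. Qed.

Lemma JcJc J : compatible_cs J -> Jc J *m Jc J = - 1%:M.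
Proof. by move=> [h _ _]; rewrite /Jc -map_mxM h map_mxN map_mx1. Qed.

Lemma Kmat_J J : compatible_cs J -> Kmat J *m Jc J = - 'i *: Kmat J.
Proof.
move=> cs; rewrite /Kmat mulmxDl mul1mx -scalemxAl JcJc // scalerDr scalerA mulNii scale1r.
by rewrite scalerN scaleNr addrC.
Qed.
Lemma Khat_J J : compatible_cs J -> Khat J *m Jc J = 'i *: Khat J.
Proof.
move=> cs; rewrite /Khat mulmxBl mul1mx -scalemxAl JcJc // scalerBr scalerA.
have mulii : 'i * 'i = -1 :> C by rewrite -expr2 sqr_i.
by rewrite mulii scaleN1r opprK scalerN opprK addrC.
Qed.

Lemma capKW J (p q : C) : compatible_cs J -> sgn p q <= 0 -> (Kmat J :&: Wm p q)%MS = 0.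
Proof.
move=> cs sq; apply/row_matrixP => i; rewrite row0.
set Y := row i _.
have hK : (Y <= Kmat J)%MS by rewrite (submx_trans (row_sub _ _)) // capmxSl.
have hW : (Y <= Wm p q)%MS by rewrite (submx_trans (row_sub _ _)) // capmxSr.
move/submxP: hK => [Z eZ]; move/submxP: hW => [c eW].
apply/eqP; apply: contraT => Y0.
have hJ : Y *m Jc J = - 'i *: Y by rewrite eZ -mulmxA Kmat_J // scalemxAr.
have := K_pos cs hJ Y0; rewrite eW.
by rewrite ltNge W_omega_le0.
Qed.

Lemma capKhatW J (p q : C) : compatible_cs J -> 0 <= sgn p q -> (Khat J :&: Wm p q)%MS = 0.
Proof.
move=> cs sq; apply/row_matrixP => i; rewrite row0.
set Y := row i _.
have hK : (Y <= Khat J)%MS by rewrite (submx_trans (row_sub _ _)) // capmxSl.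
have hW : (Y <= Wm p q)%MS by rewrite (submx_trans (row_sub _ _)) // capmxSr.
move/submxP: hK => [Z eZ]; move/submxP: hW => [c eW].
apply/eqP; apply: contraT => Y0.
have hJ : Y *m Jc J = 'i *: Y by rewrite eZ -mulmxA Khat_J // scalemxAr.
have := Khat_neg cs hJ Y0; rewrite eW.
by rewrite ltNge W_omega_ge0.
Qed.

Lemma Wm_rank (p q : C) : (p != 0) || (q != 0) -> \rank (Wm p q) = 3.
Proof.
move=> pq; apply/eqP; rewrite -[_ == _]/(row_free _) -kermx_eq0.
apply/eqP/row_matrixP => i; rewrite row0.
set c := row i _.
have hc : c *m Wm p q = 0 by rewrite -row_mul mulmx_ker row0.
apply/rowP => j; rewrite [RHS]mxE.
have hx := sumXv_x p q (fun a => c 0 a) j; have hy := sumXv_y p q (fun a => c 0 a) j.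
rewrite -Wm_mul hc mxE in hx; rewrite -Wm_mul hc mxE in hy.
case/orP: pq => [p0|q0].
- by move/eqP: hx; rewrite eq_sym mulf_eq0 (negbTE p0) orbF => /eqP.
- by move/eqP: hy; rewrite eq_sym mulf_eq0 (negbTE q0) orbF => /eqP.
Qed.

End Dev6.


Section Dev7.
Variable R : realType.
Local Notation C := R[i].
Local Notation rowC := 'rV[C]_6.
Local Notation rowR := 'rV[R]_6.

Lemma type30_ext (J : 'M[R]_6) (Om0 : form3 R) : type30 J Om0 ->
  forall Y Y2 Y3, ev3C Om0 (Y *m Jc J) Y2 Y3 = 'i * ev3C Om0 Y Y2 Y3.
Proof.
move=> [H1 H2]; have [T1 T2 T3 T4 T5 T6] := ev3C_tril Om0.
apply: (@tril_real _ (fun Y Y2 Y3 => ev3C Om0 (Y *m Jc J) Y2 Y3)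
                     (fun Y Y2 Y3 => 'i * ev3C Om0 Y Y2 Y3)).
- split => * /=; by rewrite ?mulmxDl -?scalemxAl ?(T1, T2, T3, T4, T5, T6).
- split => * /=; rewrite ?(T1, T2, T3, T4, T5, T6); ring.
- move=> u v w /=; rewrite /Jc /emb -map_mxM.
  by rewrite -[map_mx _ (u *m J)]/(emb (u *m J)) -!ev3E H2.
Qed.

Lemma KmatE (J : 'M[R]_6) (Z : rowC) : Z *m Kmat J = Z + 'i *: (Z *m Jc J).
Proof. by rewrite /Kmat mulmxDr mulmx1 scalemxAr. Qed.

Lemma Kkill1 (J : 'M[R]_6) (Om0 : form3 R) Z Y2 Y3 : type30 J Om0 ->
  ev3C Om0 (Z *m Kmat J) Y2 Y3 = 0.
Proof.
move=> t; have [T1 T2 _ _ _ _] := ev3C_tril Om0.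
rewrite KmatE T1 T2 (type30_ext t) mulrA -expr2 sqr_i; ring.
Qed.
Lemma Kkill2 (J : 'M[R]_6) (Om0 : form3 R) Z Y1 Y3 : type30 J Om0 ->
  ev3C Om0 Y1 (Z *m Kmat J) Y3 = 0.
Proof. by move=> t; rewrite ev3C_swap12 ?Kkill1 ?oppr0 //; case: t. Qed.
Lemma Kkill3 (J : 'M[R]_6) (Om0 : form3 R) Z Y1 Y2 : type30 J Om0 ->
  ev3C Om0 Y1 Y2 (Z *m Kmat J) = 0.
Proof. by move=> t; rewrite ev3C_swap23 ?Kkill2 ?oppr0 //; case: t. Qed.

Lemma rank_K (J : 'M[R]_6) : compatible_cs J -> \rank (Kmat J) = 3.
Proof.
move=> cs.
have s1 : sgn 1 (- 'i) <= 0 :> R by rewrite /sgn /=; lra.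
have s2 : 0 <= sgn 1 'i :> R by rewrite /sgn /=; lra.
have n1 : ((1 : C) != 0) || (- 'i != 0) by rewrite oner_neq0.
have n2 : ((1 : C) != 0) || ('i != 0) by rewrite oner_neq0.
have h1 := mxrank_disjoint_sum (capKW cs s1).
have h2 := mxrank_disjoint_sum (capKhatW cs s2).
rewrite Wm_rank // in h1; rewrite Wm_rank // in h2.
have c1 := rank_leq_col (Kmat J + Wm 1 (- 'i))%MS.
have c2 := rank_leq_col (Khat J + Wm 1 'i)%MS.
have sub : (1%:M <= Kmat J + Khat J)%MS.
  have E : (1%:M : 'M[C]_6) = 2^-1 *: (Kmat J + Khat J).
    rewrite /Kmat /Khat addrACA subrr addr0 -mulr2n -(scaler_nat 2 (1%:M : 'M[C]_6)) scalerA mulVf ?scale1r //.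
  by rewrite E scalemx_sub // addmx_sub_adds.
have := mxrankS sub; rewrite mxrank1 => h3.
have h4 := (mxrank_adds_leqif (Kmat J) (Khat J)).1.
- lia.
all: by rewrite oner_neq0.
Qed.

Lemma sgn_W (w : C) : `|w| <= 1 -> sgn (1 + w) (- 'i * (1 - w)) <= 0.
Proof.
case: w => x y hw.
have h : Num.sqrt (x ^+ 2 + y ^+ 2) <= 1.
  by move: hw; rewrite normc_def lecE /= => /andP[_].
have h0 : 0 <= x ^+ 2 + y ^+ 2 by rewrite addr_ge0 // sqr_ge0.
have h2 : x ^+ 2 + y ^+ 2 <= 1.
  rewrite -(sqr_sqrtr h0) exprn_ile1 //.
rewrite /sgn /=; nra.
Qed.

Lemma pq_W (w : C) : (1 + w != 0) || (- 'i * (1 - w) != 0).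
Proof.
rewrite -negb_and; apply/negP => /andP [/eqP h1 /eqP h2].
have : 1 + w + 'i * (- 'i * (1 - w)) = 2 by rewrite mulrA mulrN -mulNr mulNii mul1r; ring.
by rewrite h1 h2 mulr0 addr0 => /eqP; rewrite eq_sym pnatr_eq0.
Qed.

Definition W1 (w : C) := Wm (1 + w) (- 'i * (1 - w)).

Lemma full_KW (J : 'M[R]_6) (w : C) : compatible_cs J -> `|w| <= 1 ->
  forall Y : rowC, exists z c, Y = z *m Kmat J + c *m W1 w.
Proof.
move=> cs hw Y.
have h1 := mxrank_disjoint_sum (capKW cs (sgn_W hw)).
rewrite Wm_rank ?pq_W // rank_K // in h1.
have hf : row_full (Kmat J + W1 w)%MS by rewrite /row_full /W1 h1.
have := submx_full Y hf; case/sub_addsmxP => u ->.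
by exists u.1, u.2.
Qed.

Lemma base_case (J : 'M[R]_6) (Om0 : form3 R) : compatible_cs J -> type30 J Om0 -> U3 Om0 ->
  forall w, `|w| <= 1 -> (Qp Om0).[w] != 0.
Proof.
move=> cs t hU w hw; apply/negP => /eqP Q0.
have f3 : is_form3 Om0 by case: t.
have [T1 T2 T3 T4 T5 T6] := ev3C_tril Om0.
set p := 1 + w; set q := - 'i * (1 - w).
have eX : forall a, Xv p q a = 2 *: Xw w a.
  move=> a; rewrite /Xw /Xv /polv scalerDr !scalerA; congr (_ *: _ + _ *: _).
  - by rewrite /p mulrA div1r mulfV ?mul1r // pnatr_eq0.
  - by rewrite /q mulrA mulrCA mulfV ?mulr1 // pnatr_eq0.
have hX : ev3C Om0 (Xv p q o0) (Xv p q o1) (Xv p q o2) = 0.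
  by rewrite !eX T2 T4 T6 ev3C_Xw Q0 !mulr0.
have all0 : forall Y1 Y2 Y3, ev3C Om0 Y1 Y2 Y3 = 0.
  move=> Y1 Y2 Y3.
  have [z1 [c1 ->]] := full_KW cs hw Y1.
  have [z2 [c2 ->]] := full_KW cs hw Y2.
  have [z3 [c3 ->]] := full_KW cs hw Y3.
  rewrite T1 Kkill1 // add0r T3 Kkill2 // add0r T5 Kkill3 // add0r /W1 !Wm_mul.
  exact: (alt_sum (X := Xv p q)).
have n1 : ((1 : R) != 0) || ((0 : R) != 0) by rewrite oner_neq0.
by have := U3_Vr hU n1; rewrite ev3E all0 eqxx.
Qed.

End Dev7.


Section Dev8.
Variable R : realType.
Local Notation C := R[i].
Local Notation rowC := 'rV[C]_6.
Local Notation rowR := 'rV[R]_6.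

Lemma Xv_Xw (w : C) a : Xv (1 + w) (- 'i * (1 - w)) a = 2 *: Xw w a.
Proof.
rewrite /Xw /Xv /polv scalerDr !scalerA; congr (_ *: _ + _ *: _).
- by rewrite mulrA div1r mulfV ?mul1r // pnatr_eq0.
- by rewrite mulrA mulrCA mulfV ?mulr1 // pnatr_eq0.
Qed.

Lemma norm1_xy (x y : R) : `|x +i* y| = 1 -> x ^+ 2 + y ^+ 2 = 1.
Proof.
rewrite normc_def /= => /eqP; rewrite eq_complex /= => /andP [/eqP h _].
have h0 : 0 <= x ^+ 2 + y ^+ 2 by rewrite addr_ge0 // sqr_ge0.
by rewrite -(sqr_sqrtr h0) h expr1n.
Qed.

Lemma circle_key (w : C) : `|w| = 1 -> exists mu (p q : R),
  [/\ (p != 0) || (q != 0), mu * (1 + w) = p%:C & mu * (- 'i * (1 - w)) = q%:C].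
Proof.
case: w => x y hw; have h := norm1_xy hw.
have [hx|hx] := eqVneq x (-1).
- have hy : y = 0.
    have : y ^+ 2 = 0 by move: h; rewrite hx; lra.
    by move/eqP; rewrite sqrf_eq0 => /eqP.
  exists 'i, 0, 2; split.
  + by rewrite pnatr_eq0 orbT.
  + by apply/eqP; rewrite eq_complex /= hx hy; apply/andP; split; apply/eqP; lra.
  + by apply/eqP; rewrite eq_complex /= hx hy; apply/andP; split; apply/eqP; lra.
- exists ((1 + x) +i* (- y)), ((1 + x) ^+ 2 + y ^+ 2), (- (2 * y)); split.
  + apply/orP; left; apply: lt0r_neq0.
    have : (1 + x) != 0 by apply: contra hx; rewrite addrC addr_eq0 => /eqP ->.
    move=> h1; have : 0 < (1 + x) ^+ 2 by rewrite exprn_even_gt0 //= h1.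
    have : 0 <= y ^+ 2 by rewrite sqr_ge0.
    lra.
  + by apply/eqP; rewrite eq_complex /=; apply/andP; split; apply/eqP; ring.
  + by apply/eqP; rewrite eq_complex /=; apply/andP; split; apply/eqP; nra.
Qed.

Lemma circle (Om : form3 R) (w : C) : U3 Om -> `|w| = 1 -> (Qp Om).[w] != 0.
Proof.
move=> hU hw; have [T1 T2 T3 T4 T5 T6] := ev3C_tril Om.
have [mu [p [q [pq e1 e2]]]] := circle_key hw.
have eV : forall a, emb (Vr p q a) = mu *: (2 *: Xw w a).
  by move=> a; rewrite emb_Vr -Xv_Xw -e1 -e2 /Xv scalerDr !scalerA.
have := U3_Vr hU pq; rewrite ev3E !eV !(T2, T4, T6) ev3C_Xw.
by apply: contraNneq => ->; rewrite !mulr0.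
Qed.

Lemma size_pol b : (size (pol R b) <= 2)%N.
Proof.
case: b; rewrite /pol (leq_trans (size_scale_leq _ _)) //.
- by rewrite (leq_trans (size_add _ _)) // size_opp size_polyX size_poly1.
- by rewrite (leq_trans (size_add _ _)) // size_polyX size_poly1.
Qed.

Lemma size_Qp (Om : form3 R) : (size (Qp Om) <= 4)%N.
Proof.
rewrite /Qp; apply: (big_ind (fun p : {poly C} => (size p <= 4)%N)).
- by rewrite size_poly0.
- by move=> p q hp hq; rewrite (leq_trans (size_add _ _)) // geq_max hp.
move=> b0 _; apply: (big_ind (fun p : {poly C} => (size p <= 4)%N)).
- by rewrite size_poly0.
- by move=> p q hp hq; rewrite (leq_trans (size_add _ _)) // geq_max hp.
move=> b1 _; apply: (big_ind (fun p : {poly C} => (size p <= 4)%N)).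
- by rewrite size_poly0.
- by move=> p q hp hq; rewrite (leq_trans (size_add _ _)) // geq_max hp.
move=> b2 _; rewrite (leq_trans (size_scale_leq _ _)) //.
have h1 := size_mul_leq (pol R b0 * pol R b1) (pol R b2).
have h2 := size_mul_leq (pol R b0) (pol R b1).
have := size_pol b0; have := size_pol b1; have := size_pol b2.
lia.
Qed.

Lemma near_pt (Om : form3 R) (s : ('I_6 * 'I_6 * 'I_6)%type) (e : C) : 0 < e ->
  \forall Om' \near Om, `|(Om s : C) - (Om' : form3 R) s| < e.
Proof.
move=> e0.
have H2 : (fun g : form3 R => g s) @ nbhs Om --> (Om s : C^o).
  exact: (@proj_continuous _ (fun _ => C^o) s Om).
move/cvgr_dist_lt : H2 => /(_ e e0). exact.
Qed.

Definition close (Om Om' : form3 R) (e : C) := forall b0 b1 b2,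
  `|(Om (idx o0 b0, idx o1 b1, idx o2 b2) : C) - Om' (idx o0 b0, idx o1 b1, idx o2 b2)| < e.

Lemma near_close (Om : form3 R) (e : C) : 0 < e -> \forall Om' \near Om, close Om Om' e.
Proof.
move=> e0.
pose f := fun (b : (bool * bool * bool)%type) (Om' : form3 R) =>
   `|(Om (idx o0 b.1.1, idx o1 b.1.2, idx o2 b.2) : C) -
     (Om' : form3 R) (idx o0 b.1.1, idx o1 b.1.2, idx o2 b.2)| < e.
have : \forall Om' \near Om, forall b, f b Om'.
  exact: (@filter_forall _ _ f (nbhs Om) _ (fun b => near_pt _ _ e0)).
move=> H; apply: (filterS _ H) => Om' HH b0 b1 b2; exact: (HH (b0, b1, b2)).
Qed.

Lemma close_diff (Om Om' : form3 R) e w : close Om Om' e -> `|w| <= 1 ->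
  `|(Qp Om').[w] - (Qp Om).[w]| <= 8 * e.
Proof.
move=> hc hw; have -> : 8 * e = 2 * (2 * (2 * e)) by ring.
by apply: Qp_diff => // b0 b1 b2; rewrite distrC; apply: ltW.
Qed.

Lemma absurd_le (x : C) (k l : nat) : 0 < x -> (l < k)%N -> k%:R * x <= l%:R * x -> False.
Proof. by move=> x0 lk; rewrite ler_pM2r // ler_nat leqNgt lk. Qed.

Definition SS : set (form3 R) := [set Om | forall w : C, `|w| <= 1 -> (Qp Om).[w] != 0].

Lemma S_open (Om : form3 R) : SS Om -> nbhs Om SS.
Proof.
move=> hS; have [_ _ [m m0 hm]] := noroot_bounds (size_Qp Om) hS.
have e0 : 0 < m / 16 by rewrite divr_gt0.
apply: (filterS _ (near_close Om e0)) => Om' hc w hw; apply/negP => /eqP Q'0.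
have d := close_diff hc hw; rewrite Q'0 sub0r normrN in d.
apply: (absurd_le e0 (isT : (8 < 16)%N)).
by rewrite [X in X <= _]mulrC divfK ?pnatr_eq0 // (le_trans (hm w hw) d).
Qed.

Lemma normB3 (x y : C) : `|x| <= `|y| + `|y - x|.
Proof.
have := ler_normB y (y - x).
have -> : y - (y - x) = x by ring.
done.
Qed.

End Dev8.


Section Dev9.
Variable R : realType.
Local Notation C := R[i].

Lemma S_closed (Om : form3 R) : U3 Om -> closure ((@SS R)) Om -> (@SS R) Om.
Proof.
move=> hU hcl w0 hw0; apply/negP => /eqP Q0.
have hc : forall e : C, 0 < e -> exists Om', (@SS R) Om' /\ close Om Om' e.
  move=> e e0; have [Om' [h1 h2]] := hcl _ (near_close Om e0).
  by exists Om'.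
have n01 : `|0 : C| <= 1 by rewrite normr0 ler01.
have n11 : `|1 : C| <= 1 by rewrite normr1.
have [h1|h1] : `|w0| = 1 \/ `|w0| < 1.
  by move: hw0; rewrite le_eqVlt => /orP [/eqP|]; [left|right].
  by move: (circle hU h1); rewrite Q0 eqxx.
have [q00|q00] := eqVneq (Qp Om).[0] 0.
- have Q1 : (Qp Om).[1] != 0 by apply: circle => //; rewrite normr1.
  set e := `|(Qp Om).[1]| / 80.
  have e0 : 0 < e by rewrite divr_gt0 // normr_gt0.
  have [Om' [hS' hc']] := hc e e0.
  have [_ b2 _] := noroot_bounds (size_Qp Om') hS'.
  have d0 := close_diff hc' n01; rewrite q00 subr0 in d0.
  have d1 := close_diff hc' n11.
  have b21 := b2 1 n11.
  have H : `|(Qp Om).[1]| <= 8 * (8 * e) + 8 * e.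
    apply: (le_trans (normB3 _ ((Qp Om').[1]))); apply: lerD => //.
    by apply: (le_trans b21); apply: ler_wpM2l.
  apply: (absurd_le e0 (isT : (72 < 80)%N)).
  rewrite [X in X <= _]mulrC divfK ?pnatr_eq0 //.
  by rewrite (le_trans H) // le_eqVlt; apply/orP; left; apply/eqP; ring.
- set A := `|(Qp Om).[0]|; set d := (1 - `|w0|) ^+ 3.
  have A0 : 0 < A by rewrite normr_gt0.
  have d0 : 0 < d by rewrite exprn_gt0 // subr_gt0.
  have d1 : d <= 1 by rewrite exprn_ile1 // ?subr_ge0 ?ltW // lerBlDr lerDl.
  set e := A * d / 32.
  have e0 : 0 < e by rewrite divr_gt0 // mulr_gt0.
  have [Om' [hS' hc']] := hc e e0.
  have [b1 _ _] := noroot_bounds (size_Qp Om') hS'.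
  have dd0 := close_diff hc' n01.
  have ddw := close_diff hc' hw0; rewrite Q0 subr0 in ddw.
  have b1w := b1 w0 hw0.
  have HA : A <= `|(Qp Om').[0]| + 8 * e.
    by apply: (le_trans (normB3 _ ((Qp Om').[0]))); apply: lerD.
  have H : A * d <= 8 * e + 8 * e.
    apply: (le_trans (ler_wpM2r (ltW d0) HA)); rewrite mulrDl.
    apply: lerD; first exact: (le_trans b1w ddw).
    by rewrite ler_piMr // mulr_ge0 // ltW.
  apply: (absurd_le e0 (isT : (16 < 32)%N)).
  rewrite [X in X <= _]mulrC divfK ?pnatr_eq0 //.
  by rewrite (le_trans H) // le_eqVlt; apply/orP; left; apply/eqP; ring.
Qed.

Lemma Uplus3_S (Om : form3 R) : Uplus3 Om -> (@SS R) Om /\ U3 Om.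
Proof.
move=> [J [Om0 [cs t cc]]].
case: cc => Cc [hC0 hCU hconn] hCOm.
have hU0 := hCU _ hC0.
have hS0 : (@SS R) Om0 by move=> w hw; exact: (base_case cs t hU0).
have E : Cc `&` (@SS R) = Cc.
  apply: hconn.
  - by exists Om0.
  - exists ((@SS R)) => //; rewrite openE => x hx; exact: S_open.
  - exists (closure ((@SS R))); first exact: closed_closure.
    apply/seteqP; split => x [hx1 hx2]; split => //.
    + exact: subset_closure.
    + exact: S_closed (hCU _ hx1) hx2.
have : (Cc `&` (@SS R)) Om by rewrite E.
by case => h1 h2; split => //; apply: hCU.
Qed.

End Dev9.


Section Dev10.
Variable R : realType.
Local Notation C := R[i].
Local Notation rowC := 'rV[C]_6.

Definition dzC (j : 'I_3) (Y : rowC) : C := Y 0 (xi j) + 'i * Y 0 (yi j).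
Definition dzbC (j : 'I_3) (Y : rowC) : C := Y 0 (xi j) - 'i * Y 0 (yi j).
Definition wedge3C (t1 t2 t3 : rowC -> C) (u v w : rowC) : C :=
    t1 u * t2 v * t3 w - t1 u * t2 w * t3 v - t1 v * t2 u * t3 w
  + t1 v * t2 w * t3 u + t1 w * t2 u * t3 v - t1 w * t2 v * t3 u.

Definition RHS_C (a b1 b2 b3 c1 c2 c3 d : C) (u v w : rowC) : C :=
         a  * wedge3C (dzC o0)  (dzC o1)  (dzC o2)  u v w
       + b1 * wedge3C (dzbC o0) (dzC o1)  (dzC o2)  u v w
       + b2 * wedge3C (dzC o0)  (dzbC o1) (dzC o2)  u v w
       + b3 * wedge3C (dzC o0)  (dzC o1)  (dzbC o2) u v w
       + c1 * wedge3C (dzC o0)  (dzbC o1) (dzbC o2) u v w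
       + c2 * wedge3C (dzbC o0) (dzC o1)  (dzbC o2) u v w
       + c3 * wedge3C (dzbC o0) (dzbC o1) (dzC o2)  u v w
       + d  * wedge3C (dzbC o0) (dzbC o1) (dzbC o2) u v w.

Lemma dzC_add j Y Y' : dzC j (Y + Y') = dzC j Y + dzC j Y'.
Proof. rewrite /dzC !mxE; ring. Qed.
Lemma dzC_scale j c Y : dzC j (c *: Y) = c * dzC j Y.
Proof. rewrite /dzC !mxE; ring. Qed.
Lemma dzbC_add j Y Y' : dzbC j (Y + Y') = dzbC j Y + dzbC j Y'.
Proof. rewrite /dzbC !mxE; ring. Qed.
Lemma dzbC_scale j c Y : dzbC j (c *: Y) = c * dzbC j Y.
Proof. rewrite /dzbC !mxE; ring. Qed.

Lemma RHS_tril a b1 b2 b3 c1 c2 c3 d : tril (RHS_C a b1 b2 b3 c1 c2 c3 d).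
Proof.
split => *; rewrite /RHS_C /wedge3C !(dzC_add, dzC_scale, dzbC_add, dzbC_scale); ring.
Qed.

Lemma dzC_emb j u : dzC j (emb u) = dz j u.
Proof. by rewrite /dzC /dz !mxE. Qed.
Lemma dzbC_emb j u : dzbC j (emb u) = dzb j u.
Proof. by rewrite /dzbC /dzb !mxE. Qed.

Lemma ii : 'i * - 'i = 1 :> C.
Proof. by rewrite mulrN -expr2 sqr_i opprK. Qed.

Lemma polv_sum w : polv w false + 'i * polv w true = 1 :> C.
Proof. by rewrite /polv mulrA (mulrA 'i) ii mul1r; field. Qed.
Lemma polv_dif w : polv w false - 'i * polv w true = w :> C.
Proof. by rewrite /polv mulrA (mulrA 'i) ii mul1r; field. Qed.

Lemma dzC_Xw w a j : dzC j (Xw w a) = (a == j)%:R.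
Proof.
rewrite /dzC /Xw !XvEx !XvEy.
transitivity ((a == j)%:R * (polv w false + 'i * polv w true)); first ring.
by rewrite polv_sum mulr1.
Qed.
Lemma dzbC_Xw w a j : dzbC j (Xw w a) = (a == j)%:R * w.
Proof.
rewrite /dzbC /Xw !XvEx !XvEy.
transitivity ((a == j)%:R * (polv w false - 'i * polv w true)); first ring.
by rewrite polv_dif.
Qed.

Lemma o01 : (o0 == o1) = false. Proof. by apply/negbTE; rewrite -val_eqE /= !inordK. Qed.
Lemma o02 : (o0 == o2) = false. Proof. by apply/negbTE; rewrite -val_eqE /= !inordK. Qed.
Lemma o10 : (o1 == o0) = false. Proof. by apply/negbTE; rewrite -val_eqE /= !inordK. Qed.
Lemma o12 : (o1 == o2) = false. Proof. by apply/negbTE; rewrite -val_eqE /= !inordK. Qed.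
Lemma o20 : (o2 == o0) = false. Proof. by apply/negbTE; rewrite -val_eqE /= !inordK. Qed.
Lemma o21 : (o2 == o1) = false. Proof. by apply/negbTE; rewrite -val_eqE /= !inordK. Qed.


End Dev10.


Section Dev11.
Variable R : realType.
Local Notation C := R[i].
Local Notation rowC := 'rV[C]_6.
Lemma Qp_formula (Om : form3 R) (a b1 b2 b3 c1 c2 c3 d : C) :
  (forall u v w : 'rV[R]_6,
     ev3 Om u v w =
         a  * wedge3 (dz o0)  (dz o1)  (dz o2)  u v w
       + b1 * wedge3 (dzb o0) (dz o1)  (dz o2)  u v w
       + b2 * wedge3 (dz o0)  (dzb o1) (dz o2)  u v w
       + b3 * wedge3 (dz o0)  (dz o1)  (dzb o2) u v w
       + c1 * wedge3 (dz o0)  (dzb o1) (dzb o2) u v w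
       + c2 * wedge3 (dzb o0) (dz o1)  (dzb o2) u v w
       + c3 * wedge3 (dzb o0) (dzb o1) (dz o2)  u v w
       + d  * wedge3 (dzb o0) (dzb o1) (dzb o2) u v w) ->
  forall w, (Qp Om).[w] = a + (b1 + b2 + b3) * w + (c1 + c2 + c3) * w ^+ 2 + d * w ^+ 3.
Proof.
move=> H w.
have E : forall Y1 Y2 Y3, ev3C Om Y1 Y2 Y3 = RHS_C a b1 b2 b3 c1 c2 c3 d Y1 Y2 Y3.
    apply: (tril_real (ev3C_tril Om) (RHS_tril _ _ _ _ _ _ _ _)) => u v w'.
    rewrite -ev3E H /RHS_C /wedge3C /wedge3 !dzC_emb !dzbC_emb.
  reflexivity.
rewrite -ev3C_Xw E.
have hv1 := dzC_Xw w; have hv2 := dzbC_Xw w.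
set X := Xw w in hv1 hv2 *; clearbody X.
rewrite /RHS_C /wedge3C.
rewrite !hv1 !hv2.
rewrite !eqxx ?o01 ?o02 ?o10 ?o12 ?o20 ?o21 /=.
ring.
Qed.
Lemma normr_prod_seq (r : seq C) (f : C -> C) :
  `|\prod_(z <- r) f z| = \prod_(z <- r) `|f z|.
Proof.
elim: r => [|z r IH]; first by rewrite !big_nil normr1.
by rewrite !big_cons normrM IH.
Qed.

Lemma final_part (Om : form3 R) (a b1 b2 b3 c1 c2 c3 d : C) :
  (@SS R) Om ->
  (forall w, (Qp Om).[w] = a + (b1 + b2 + b3) * w + (c1 + c2 + c3) * w ^+ 2 + d * w ^+ 3) ->
  a != 0 /\ (forall z : C,
     root (a *: 'X^3 + (b1 + b2 + b3) *: 'X^2 + (c1 + c2 + c3) *: 'X + d%:P) z ->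
     `|z| < 1) /\ `|d / a| < 1.
Proof.
move=> hS Qf.
set B := b1 + b2 + b3; set Cc := c1 + c2 + c3.
have n01 : `|0 : C| <= 1 by rewrite normr0 ler01.
have a0 : a != 0.
  have := hS 0 n01; rewrite Qf.
  have -> : a + B * 0 + Cc * 0 ^+ 2 + d * 0 ^+ 3 = a by ring.
  done.
have roots : forall z : C, root (a *: 'X^3 + B *: 'X^2 + Cc *: 'X + d%:P) z -> `|z| < 1.
  move=> z; rewrite /root => /eqP Pz0.
  have Pz : a * z ^+ 3 + B * z ^+ 2 + Cc * z + d = 0.
    by move: Pz0; rewrite !hornerE => <-; ring.
  rewrite real_ltNge ?normr_real ?real1 //; apply/negP => hz1.
  have z0 : z != 0.
    by apply: contraTneq hz1 => ->; rewrite normr0 ler10.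
  have hw : `|z^-1| <= 1.
    by rewrite normfV invf_le1 // normr_gt0.
  move: (hS _ hw); rewrite Qf.
  have -> : a + B * z^-1 + Cc * z^-1 ^+ 2 + d * z^-1 ^+ 3 =
            (a * z ^+ 3 + B * z ^+ 2 + Cc * z + d) / z ^+ 3.
    by field.
  by rewrite Pz mul0r eqxx.
split => //; split => //.
set P := a *: 'X^3 + B *: 'X^2 + Cc *: 'X + d%:P.
set q := B *: 'X^2 + Cc *: 'X + d%:P.
have eP : P = a *: 'X^3 + q by rewrite /P /q !addrA.
have sq : (size q < 4)%N.
  rewrite /q; apply: (leq_ltn_trans (size_add _ _)); rewrite gtn_max; apply/andP; split.
  - apply: (leq_ltn_trans (size_add _ _)); rewrite gtn_max; apply/andP; split.
    + by rewrite (leq_ltn_trans (size_scale_leq _ _)) // size_polyXn.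
    + by rewrite (leq_ltn_trans (size_scale_leq _ _)) // size_polyX.
  - by rewrite (leq_ltn_trans (size_polyC_leq1 _)).
have sa : size (a *: 'X^3 : {poly C}) = 4 by rewrite size_scale // size_polyXn.
have sP : size P = 4 by rewrite eP size_addl // sa.
have lP : lead_coef P = a by rewrite eP lead_coefDl ?sa // lead_coefZ lead_coefXn mulr1.
have [r Hr] := closed_field_poly_normal P.
have sr : size r = 3.
  by move: sP; rewrite Hr size_scale ?lP // size_prod_XsubC => -[].
have hr : forall z, z \in r -> `|z| < 1.
  move=> z hz; apply: roots; rewrite -/P Hr /root hornerZ.
  have : root (\prod_(x <- r) ('X - x%:P)) z by rewrite root_prod_XsubC.
  by move/eqP => ->; rewrite mulr0.
have P0 : P.[0] = d.
  rewrite /P !hornerE /=. ring.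
have dd : d / a = \prod_(z <- r) (0 - z).
  rewrite -P0 Hr hornerZ lP horner_prod mulrC mulrA mulVf // mul1r.
  by apply: eq_bigr => z _; rewrite hornerXsubC.
rewrite dd normr_prod_seq.
move: hr sr; case: r {Hr dd} => [|z1 [|z2 [|z3 [|]]]] // hr _.
rewrite !big_cons big_nil mulr1 !sub0r !normrN.
have h1 : `|z1| < 1 by apply: hr; rewrite !inE eqxx.
have h2 : `|z2| < 1 by apply: hr; rewrite !inE eqxx orbT.
have h3 : `|z3| < 1 by apply: hr; rewrite !inE eqxx !orbT.
have h23 : `|z2| * `|z3| <= 1 by rewrite mulr_ile1 // ltW.
by rewrite (le_lt_trans _ h1) // ler_piMr.
Qed.
End Dev11.

Local Close Scope classical_set_scope.
Unset Implicit Arguments. Set Strict Implicit. Set Printing Implicit Defensive.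

Theorem lemma5p2 (R : realType) (Om : form3 R)
    (a b1 b2 b3 c1 c2 c3 d : R[i]) :
  Uplus3 Om ->
  (forall u v w : 'rV[R]_6,
     ev3 Om u v w =
         a  * wedge3 (dz o0)  (dz o1)  (dz o2)  u v w
       + b1 * wedge3 (dzb o0) (dz o1)  (dz o2)  u v w
       + b2 * wedge3 (dz o0)  (dzb o1) (dz o2)  u v w
       + b3 * wedge3 (dz o0)  (dz o1)  (dzb o2) u v w
       + c1 * wedge3 (dz o0)  (dzb o1) (dzb o2) u v w
       + c2 * wedge3 (dzb o0) (dz o1)  (dzb o2) u v w
       + c3 * wedge3 (dzb o0) (dzb o1) (dz o2)  u v w
       + d  * wedge3 (dzb o0) (dzb o1) (dzb o2) u v w) ->
  a != 0 /\
  (forall z : R[i],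
     root (a *: 'X^3 + (b1 + b2 + b3) *: 'X^2 + (c1 + c2 + c3) *: 'X + d%:P) z ->
     `|z| < 1) /\
  `|d / a| < 1.
Proof.
move=> hUp H.
have [hS _] := Uplus3_S hUp.
exact: (final_part hS (Qp_formula H)).
Qed.
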